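(* Let $X$ and $Y$ be metric spaces with $X$ complete, and let $f\colon X\to Y$ be a continuous open surjection. Then $f$ is density-surjective, i.e. there exists a subset $Z\subset X$ such that $\mathrm{dens}(Z)=\mathrm{dens}(Y)$ and $f|_Z\colon Z\to Y$ is surjective.
   Context: For a metric space $W$, $\mathrm{dens}(W)$ (the density character) denotes the smallest cardinality of a dense subset of $W$. A map $f\colon X\to Y$ between metric spaces is called density-surjective if there is a subset $Z\subset X$ with $\mathrm{dens}(Z)=\mathrm{dens}(Y)$ such that $f|_Z\colon Z\to Y$ is surjective. A map is open if it maps open sets to open sets. *)

(* Defs.v *)
From Stdlib Require Import Reals.
Open Scope R_scope.
Set Implicit Arguments.

Record MetricSpace := {
  carrier :> Type;
  dist : carrier -> carrier -> R;
  dist_nonneg : forall x y, 0 <= dist x y;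
  dist_eq0 : forall x y, dist x y = 0 <-> x = y;
  dist_sym : forall x y, dist x y = dist y x;
  dist_tri : forall x y z, dist x z <= dist x y + dist y z
}.

Arguments dist {m} _ _.

Definition open_set {X : MetricSpace} (U : X -> Prop) : Prop :=
  forall x, U x -> exists e, 0 < e /\ forall y, dist x y < e -> U y.

Definition cauchy_seq {X : MetricSpace} (u : nat -> X) : Prop :=
  forall e, 0 < e -> exists N, forall m n, (N <= m)%nat -> (N <= n)%nat -> dist (u m) (u n) < e.

Definition converges_to {X : MetricSpace} (u : nat -> X) (l : X) : Prop :=
  forall e, 0 < e -> exists N, forall n, (N <= n)%nat -> dist (u n) l < e.

Definition complete (X : MetricSpace) : Prop :=
  forall u : nat -> X, cauchy_seq u -> exists l, converges_to u l.

Definition continuous_map {X Y : MetricSpace} (f : X -> Y) : Prop :=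
  forall x e, 0 < e -> exists d, 0 < d /\ forall y, dist x y < d -> dist (f x) (f y) < e.

Definition image {X Y : Type} (f : X -> Y) (U : X -> Prop) : Y -> Prop :=
  fun y => exists x, U x /\ f x = y.

Definition open_map {X Y : MetricSpace} (f : X -> Y) : Prop :=
  forall U : X -> Prop, open_set U -> open_set (image f U).

Definition surjective {X Y : Type} (f : X -> Y) : Prop := forall y, exists x, f x = y.

Definition dense_in {X : MetricSpace} (W D : X -> Prop) : Prop :=
  (forall x, D x -> W x) /\
  (forall x, W x -> forall e, 0 < e -> exists d, D d /\ dist x d < e).

Definition card_le {T U : Type} (A : T -> Prop) (B : U -> Prop) : Prop :=
  exists g : sig A -> sig B, forall a1 a2, g a1 = g a2 -> a1 = a2.

(* dens(W1) <= dens(W2): every dense subset of W2 has cardinality at least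
   that of some dense subset of W1 (i.e. min over dense subsets compares). *)
Definition dens_le {X Y : MetricSpace} (W1 : X -> Prop) (W2 : Y -> Prop) : Prop :=
  forall D2, dense_in W2 D2 -> exists D1, dense_in W1 D1 /\ card_le D1 D2.

Definition dens_eq {X Y : MetricSpace} (W1 : X -> Prop) (W2 : Y -> Prop) : Prop :=
  dens_le W1 W2 /\ dens_le W2 W1.

Definition density_surjective {X Y : MetricSpace} (f : X -> Y) : Prop :=
  exists Z : X -> Prop,
    dens_eq Z (fun _ : Y => True) /\ (forall y : Y, exists x, Z x /\ f x = y).

(* Main.v *)
Require Import Defs.
From Stdlib Require Import Reals Lra Lia List Classical ClassicalEpsilon ProofIrrelevance FunctionalExtensionality PropExtensionality.
From Stdlib Require Cantor.
From mathcomp Require classical_sets.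
Import Defs.
Set Bullet Behavior "Strict Subproofs".
Close Scope R_scope.


Lemma zorn_sets (T:Type) (P : (T->Prop) -> Prop) :
  (forall F : (T->Prop)->Prop, (forall S, F S -> P S) ->
     (forall S1 S2, F S1 -> F S2 -> (forall x, S1 x -> S2 x) \/ (forall x, S2 x -> S1 x)) ->
     P (fun x => exists S, F S /\ S x)) ->
  exists A, P A /\ forall B, (forall x, A x -> B x) -> (exists x, B x /\ ~ A x) -> ~ P B.
Proof.
  intros H.
  destruct (@classical_sets.Zorn_bigcup T P) as [A [PA HA]].
  - intros F HF Ht.
    assert (E : classical_sets.bigcup F (fun X => X) = (fun x => exists S, F S /\ S x)).
    { apply functional_extensionality; intros x; apply propositional_extensionality.
      unfold classical_sets.bigcup, classical_sets.mkset; split.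
      - intros [S FS Sx]; eauto.
      - intros [S [FS Sx]]; econstructor; eauto. }
    rewrite E. apply H; [exact HF|].
    intros S1 S2 F1 F2. destruct (Ht S1 S2 F1 F2) as [h|h]; [left|right]; exact h.
  - exists A; split; auto.
    intros B AB [x [Bx nAx]] PB. apply (HA B); auto.
    split.
    + exact AB.
    + intros BA. apply nAx. apply BA. exact Bx.
Qed.

Definition choosef {T : Type} (P : T -> Prop) (H : exists x, P x) : T :=
  proj1_sig (constructive_indefinite_description P H).

Lemma choose_def {T : Type} (u0 : T) (P : T -> Prop) : {x : T | (exists y, P y) -> P x}.
Proof.
  apply constructive_indefinite_description.
  destruct (classic (exists y, P y)) as [[y Py]|N].
  - exists y; auto.
  - exists u0; intros H; exfalso; auto.
Qed.

Definition injon {T V : Type} (A : T -> Prop) (f : T -> V) :=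
  forall a a', A a -> A a' -> f a = f a' -> a = a'.

Lemma compar (U : Type) (u0 : U) (A B : U -> Prop) :
  (exists phi : U -> U, (forall a, A a -> B (phi a)) /\ injon A phi) \/
  (exists psi : U -> U, (forall b, B b -> A (psi b)) /\ injon B psi).
Proof.
  set (P := fun G : U * U -> Prop =>
    (forall a b, G (a,b) -> A a /\ B b) /\
    (forall a b b', G (a,b) -> G (a,b') -> b = b') /\
    (forall a a' b, G (a,b) -> G (a',b) -> a = a')).
  destruct (@zorn_sets (U*U) P) as [M [[M1 [M2 M3]] Mmax]].
  - intros F HF Ht. unfold P. split; [|split].
    + intros a b [S [FS Sab]]. apply (proj1 (HF S FS)); auto.
    + intros a b b' [S [FS Sab]] [S' [FS' Sab']].
      destruct (Ht S S' FS FS') as [h|h].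
      * apply (proj1 (proj2 (HF S' FS')) a b b'); auto.
      * apply (proj1 (proj2 (HF S FS)) a b b'); auto.
    + intros a a' b [S [FS Sab]] [S' [FS' Sab']].
      destruct (Ht S S' FS FS') as [h|h].
      * apply (proj2 (proj2 (HF S' FS')) a a' b); auto.
      * apply (proj2 (proj2 (HF S FS)) a a' b); auto.
  - destruct (classic (forall a, A a -> exists b, M (a,b))) as [HA|HA].
    + left. exists (fun a => proj1_sig (choose_def u0 (fun b => A a -> M (a,b)))).
      split.
      * intros a Aa. destruct (choose_def u0 (fun b => A a -> M (a,b))) as [b Hb]; simpl.
        destruct (HA a Aa) as [b' Hb']. apply (proj2 (M1 a b (Hb ltac:(eauto) Aa))).
      * intros a a' Aa Aa'.
        destruct (choose_def u0 (fun b => A a -> M (a,b))) as [b Hb]; simpl.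
        destruct (choose_def u0 (fun b => A a' -> M (a',b))) as [b' Hb']; simpl.
        intros ->. destruct (HA a Aa) as [c Hc]. destruct (HA a' Aa') as [c' Hc'].
        apply (M3 a a' b'); [apply Hb|apply Hb']; eauto.
    + destruct (classic (forall b, B b -> exists a, M (a,b))) as [HB|HB].
      * right. exists (fun b => proj1_sig (choose_def u0 (fun a => B b -> M (a,b)))).
        split.
        -- intros b Bb. destruct (choose_def u0 (fun a => B b -> M (a,b))) as [a Ha]; simpl.
           destruct (HB b Bb) as [a' Ha']. apply (proj1 (M1 a b (Ha ltac:(eauto) Bb))).
        -- intros b b' Bb Bb'.
           destruct (choose_def u0 (fun a => B b -> M (a,b))) as [a Ha]; simpl.
           destruct (choose_def u0 (fun a => B b' -> M (a,b'))) as [a' Ha']; simpl.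
           intros ->. destruct (HB b Bb) as [c Hc]. destruct (HB b' Bb') as [c' Hc'].
           apply (M2 a' b b'); [apply Ha|apply Ha']; eauto.
      * exfalso.
        apply not_all_ex_not in HA. destruct HA as [a Ha].
        apply imply_to_and in Ha. destruct Ha as [Aa Ha].
        apply not_all_ex_not in HB. destruct HB as [b Hb].
        apply imply_to_and in Hb. destruct Hb as [Bb Hb].
        apply (Mmax (fun p => M p \/ p = (a,b))).
        -- auto.
        -- exists (a,b). split; auto. intros Mab. apply Ha. eauto.
        -- unfold P. split; [|split].
           ++ intros x y [H|H]; auto. injection H; intros -> ->; auto.
           ++ intros x y y' [H|H] [H'|H'].
              ** eauto.
              ** injection H'; intros -> ->. exfalso; apply Ha; eauto.
              ** injection H; intros -> ->. exfalso; apply Ha; eauto.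
              ** injection H; injection H'; intros; subst; auto.
           ++ intros x x' y [H|H] [H'|H'].
              ** eauto.
              ** injection H'; intros -> ->. exfalso; apply Hb; eauto.
              ** injection H; intros -> ->. exfalso; apply Hb; eauto.
              ** injection H; injection H'; intros; subst; auto.
Qed.


Definition pi (i j : nat) := Cantor.to_nat (i,j).
Lemma pi_inj i j i' j' : pi i j = pi i' j' -> i = i' /\ j = j'.
Proof.
  unfold pi; intros H. assert (E := f_equal Cantor.of_nat H).
  rewrite !Cantor.cancel_of_to in E. injection E; auto.
Qed.

Section Hess.
Variable U : Type.
Variable e : nat -> U.
Hypothesis He : forall i j, e i = e j -> i = j.

Definition Elem := (U + ((U*U)*U))%type.
Definition Bs (S : Elem -> Prop) u := S (inl u).
Definition Gs (S : Elem -> Prop) a b v := S (inr ((a,b),v)).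

Definition Good (S : Elem -> Prop) :=
  (forall i j, Gs S (e i) (e j) (e (pi i j))) /\
  (forall i, Bs S (e i)) /\
  (forall a b v, Gs S a b v -> Bs S a /\ Bs S b /\ Bs S v) /\
  (forall a b v v', Gs S a b v -> Gs S a b v' -> v = v') /\
  (forall a b a' b' v, Gs S a b v -> Gs S a' b' v -> a = a' /\ b = b') /\
  (forall a b, Bs S a -> Bs S b -> exists v, Gs S a b v).

Definition Base (z : Elem) : Prop :=
  match z with
  | inl u => exists i, u = e i
  | inr ((a,b),v) => exists i j, a = e i /\ b = e j /\ v = e (pi i j)
  end.

Lemma Good_Base : Good Base.
Proof.
  unfold Good, Bs, Gs, Base; simpl. split; [|split; [|split; [|split; [|split]]]].
  - intros i j; exists i, j; auto.
  - intros i; exists i; auto.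
  - intros a b v [i [j [-> [-> ->]]]]. split; [|split]; eexists; eauto.
  - intros a b v v' [i [j [-> [-> ->]]]] [i' [j' [Ha [Hb ->]]]].
    apply He in Ha; apply He in Hb; subst; auto.
  - intros a b a' b' v [i [j [-> [-> ->]]]] [i' [j' [-> [-> Hv]]]].
    apply He in Hv. apply pi_inj in Hv. destruct Hv; subst; auto.
  - intros a b [i ->] [j ->]. exists (e (pi i j)). exists i, j; auto.
Qed.

Lemma Good_max : exists M, Good M /\
   forall M', (forall z, M z -> M' z) -> (exists z, M' z /\ ~ M z) -> ~ Good M'.
Proof.
  destruct (@zorn_sets Elem (fun S => (forall z, ~ S z) \/ Good S)) as [M [PM Mmax]].
  - intros F HF Ht.
    assert (HG : forall S z, F S -> S z -> Good S).
    { intros S z FS Sz. destruct (HF S FS) as [h|h]; auto. exfalso; eapply h; eauto. }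
    destruct (classic (exists S z, F S /\ S z)) as [[S0 [z0 [FS0 S0z]]]|N].
    + right. assert (G0 := HG S0 z0 FS0 S0z).
      destruct G0 as [g01 [g02 _]].
      unfold Good, Bs, Gs. split; [|split; [|split; [|split; [|split]]]].
      * intros i j. exists S0; split; auto. apply g01.
      * intros i. exists S0; split; auto. apply g02.
      * intros a b v [S [FS Sz]]. destruct (HG S _ FS Sz) as [_ [_ [g3 _]]].
        destruct (g3 a b v Sz) as [h1 [h2 h3]].
        split; [|split]; exists S; auto.
      * intros a b v v' [S [FS Sz]] [S' [FS' Sz']].
        destruct (Ht S S' FS FS') as [h|h].
        -- destruct (HG S' _ FS' Sz') as [_ [_ [_ [g4 _]]]]. apply (g4 a b); [apply h; exact Sz|exact Sz'].
        -- destruct (HG S _ FS Sz) as [_ [_ [_ [g4' _]]]]. apply (g4' a b); [exact Sz|apply h; exact Sz'].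
      * intros a b a' b' v [S [FS Sz]] [S' [FS' Sz']].
        destruct (Ht S S' FS FS') as [h|h].
        -- destruct (HG S' _ FS' Sz') as [_ [_ [_ [_ [g5 _]]]]]. apply (g5 a b a' b' v); [apply h; exact Sz|exact Sz'].
        -- destruct (HG S _ FS Sz) as [_ [_ [_ [_ [g5' _]]]]]. apply (g5' a b a' b' v); [exact Sz|apply h; exact Sz'].
      * intros a b [S [FS Sz]] [S' [FS' Sz']].
        destruct (Ht S S' FS FS') as [h|h].
        -- destruct (HG S' _ FS' Sz') as [_ [_ [_ [_ [_ g6]]]]].
           destruct (g6 a b) as [v Hv]; [apply h; exact Sz|exact Sz'|]. exists v, S'; auto.
        -- destruct (HG S _ FS Sz) as [_ [_ [_ [_ [_ g6']]]]].
           destruct (g6' a b) as [v Hv]; [exact Sz|apply h; exact Sz'|]. exists v, S; auto.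
    + left. intros z [S [FS Sz]]. apply N; eauto.
  - destruct PM as [E|G].
    + exfalso. apply (Mmax Base).
      * intros z Mz; exfalso; eapply E; eauto.
      * exists (inl (e 0)). split; [exists 0; auto|apply E].
      * right; apply Good_Base.
    + exists M; split; auto.
      intros M' H1 H2 G'. apply (Mmax M'); auto.
Qed.

Theorem hess_main : exists h : U * U -> U, forall p q, h p = h q -> p = q.
Proof.
  destruct Good_max as [M [[g1 [g2 [g3 [g4 [g5 g6]]]]] Mmax]].
  set (B := Bs M).
  set (gf := fun a b => proj1_sig (choose_def (e 0) (fun v => B a -> B b -> Gs M a b v))).
  assert (gfG : forall a b, B a -> B b -> Gs M a b (gf a b)).
  { intros a b Ba Bb. unfold gf. destruct (choose_def (e 0) (fun v => B a -> B b -> Gs M a b v)) as [v Hv]; simpl.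
    apply Hv; auto. destruct (g6 a b Ba Bb) as [w Hw]. exists w; auto. }
  assert (gfB : forall a b, B a -> B b -> B (gf a b)).
  { intros a b Ba Bb. destruct (g3 _ _ _ (gfG a b Ba Bb)) as [_ [_ h]]; exact h. }
  assert (gfI : forall a b a' b', B a -> B b -> B a' -> B b' -> gf a b = gf a' b' -> a = a' /\ b = b').
  { intros a b a' b' Ba Bb Ba' Bb' E. apply (g5 a b a' b' (gf a b)); auto.
    rewrite E; auto. }
  destruct (compar U (e 0) (fun u => ~ B u) B) as [[phi [phiB phiI]]|[psi [psiR psiI]]].
  -
    set (k := fun u => match excluded_middle_informative (B u) with
                       | left _ => gf u (e 0) | right _ => gf (phi u) (e 1) end).
    assert (kB : forall u, B (k u)).
    { intros u; unfold k. destruct (excluded_middle_informative (B u)); apply gfB; auto; apply g2. }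
    assert (kI : forall u u', k u = k u' -> u = u').
    { intros u u'; unfold k.
      destruct (excluded_middle_informative (B u)) as [bu|bu];
      destruct (excluded_middle_informative (B u')) as [bu'|bu']; intros E.
      - apply gfI in E; try apply g2; auto. tauto.
      - apply gfI in E; try apply g2; auto. destruct E as [_ E]. apply He in E. discriminate.
      - apply gfI in E; try apply g2; auto. destruct E as [_ E]. apply He in E. discriminate.
      - apply gfI in E; try apply g2; auto. destruct E as [E _]. apply phiI; auto. }
    exists (fun p => gf (k (fst p)) (k (snd p))).
    intros [a b] [a' b']; simpl; intros E.
    apply gfI in E; auto. destruct E as [E1 E2]. apply kI in E1; apply kI in E2. subst; auto.
  - exfalso.
    set (C := fun x => exists b, B b /\ psi b = x).
    assert (CB : forall x, C x -> ~ B x).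
    { intros x [b [Bb <-]]. apply psiR; auto. }
    set (jinv := fun x => proj1_sig (choose_def (e 0) (fun b => B b /\ psi b = x))).
    assert (jinvP : forall x, C x -> B (jinv x) /\ psi (jinv x) = x).
    { intros x Cx. unfold jinv. destruct (choose_def (e 0) (fun b => B b /\ psi b = x)) as [b Hb]; simpl.
      apply Hb. exact Cx. }
    set (back := fun x => match excluded_middle_informative (C x) with
                          | left _ => jinv x | right _ => x end).
    assert (backB : forall x, B x \/ C x -> B (back x)).
    { intros x H. unfold back. destruct (excluded_middle_informative (C x)) as [c|c].
      - apply jinvP; auto.
      - destruct H; tauto. }
    set (tag := fun a b => match excluded_middle_informative (C a) with
                           | left _ => match excluded_middle_informative (C b) with
                                       | left _ => 3 | right _ => 1 end
                           | right _ => 2 end).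
    set (code := fun a b => gf (gf (back a) (back b)) (e (tag a b))).
    assert (codeB : forall a b, B a \/ C a -> B b \/ C b -> B (code a b)).
    { intros a b Ha Hb. unfold code. apply gfB; [apply gfB; apply backB; auto| apply g2]. }
    set (newp := fun a b => (B a \/ C a) /\ (B b \/ C b) /\ (C a \/ C b)).
    set (M' := fun z => M z \/ match z with
                                | inl u => C u
                                | inr ((a,b),v) => newp a b /\ v = psi (code a b) end).
    apply (Mmax M').
    + intros z Mz; left; auto.
    + exists (inl (psi (e 0))). split.
      * right. simpl. exists (e 0); split; auto. apply g2.
      * intros H. apply (psiR (e 0)); [apply g2|]. exact H.
    + assert (BsM' : forall u, Bs M' u <-> B u \/ C u).
      { intros u; unfold Bs, M'; simpl; tauto. }
      assert (codeI : forall a b a' b', newp a b -> newp a' b' -> code a b = code a' b' -> a = a' /\ b = b').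
      { intros a b a' b' [Ha [Hb Hab]] [Ha' [Hb' Hab']] E. unfold code in E.
        apply gfI in E; try apply g2; try (apply gfB; apply backB; auto).
        destruct E as [E1 E2]. apply He in E2.
        apply gfI in E1; try (apply backB; auto). destruct E1 as [E1 E3].
        assert (sameC : forall x y, (C x <-> C y) -> B x \/ C x -> B y \/ C y -> back x = back y -> x = y).
        { intros x y Hxy Hx Hy. unfold back.
          destruct (excluded_middle_informative (C x)) as [cx|cx];
          destruct (excluded_middle_informative (C y)) as [cy|cy]; try tauto.
          intros Ej. destruct (jinvP x cx) as [_ jx]. destruct (jinvP y cy) as [_ jy].
          rewrite <- jx, <- jy, Ej. auto. }
        unfold tag in E2.
        destruct (excluded_middle_informative (C a)) as [ca|ca];
        destruct (excluded_middle_informative (C b)) as [cb|cb];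
        destruct (excluded_middle_informative (C a')) as [ca'|ca'];
        destruct (excluded_middle_informative (C b')) as [cb'|cb']; try discriminate E2;
        split; apply sameC; auto; tauto. }
      unfold Good. split; [|split; [|split; [|split; [|split]]]].
      * intros i j. left. apply g1.
      * intros i. left. apply g2.
      * intros a b v [H|[[Ha [Hb _]] Hv]].
        -- destruct (g3 a b v H) as [h1 [h2 h3]]. unfold Bs, M'; auto.
        -- rewrite !BsM'. split; [|split]; auto. right. subst v.
           exists (code a b); split; auto.
      * intros a b v v' [H|[Hn Hv]] [H'|[Hn' Hv']].
        -- apply (g4 a b); auto.
        -- exfalso. destruct (g3 a b v H) as [h1 [h2 _]]. destruct Hn' as [_ [_ [c|c]]]; eapply CB; eauto.
        -- exfalso. destruct (g3 a b v' H') as [h1 [h2 _]]. destruct Hn as [_ [_ [c|c]]]; eapply CB; eauto.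
        -- subst; auto.
      * intros a b a' b' v [H|[Hn Hv]] [H'|[Hn' Hv']].
        -- apply (g5 a b a' b' v); auto.
        -- exfalso. destruct (g3 a b v H) as [_ [_ h]]. apply (psiR (code a' b')).
           ++ destruct Hn' as [? [? _]]; apply codeB; auto.
           ++ rewrite <- Hv'. exact h.
        -- exfalso. destruct (g3 a' b' v H') as [_ [_ h]]. apply (psiR (code a b)).
           ++ destruct Hn as [? [? _]]; apply codeB; auto.
           ++ rewrite <- Hv. exact h.
        -- apply codeI; auto. apply psiI.
           ++ destruct Hn as [? [? _]]; apply codeB; auto.
           ++ destruct Hn' as [? [? _]]; apply codeB; auto.
           ++ rewrite <- Hv, <- Hv'. auto.
      * intros a b Ha Hb. rewrite BsM' in Ha, Hb.
        destruct (classic (B a /\ B b)) as [[Ba Bb]|N].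
        -- destruct (g6 a b Ba Bb) as [v Hv]. exists v. left; auto.
        -- exists (psi (code a b)). right. split; auto.
           split; [|split]; auto. tauto.
Qed.
End Hess.

Open Scope R_scope.

Definition inj {A B : Type} (g : A -> B) := forall a b, g a = g b -> a = b.

Lemma sig_eq {T : Type} (P : T -> Prop) (s t : sig P) : proj1_sig s = proj1_sig t -> s = t.
Proof. destruct s as [x p], t as [y q]; simpl; intros ->. f_equal; apply proof_irrelevance. Qed.

Fixpoint enc {V : Type} (v0 : V) (h : V * V -> V) (l : list V) : V :=
  match l with nil => v0 | a :: l' => h (a, enc v0 h l') end.

Lemma list_inj {V : Type} (v0 : V) (h : V * V -> V) : inj h ->
  inj (fun l : list V => (length l, enc v0 h l)).
Proof.
  intros Hh l1. induction l1 as [|a l1 IH]; intros [|b l2]; simpl; intros E; try discriminate; auto.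
  injection E; intros E2 E1. apply Hh in E2. injection E2; intros E3 ->.
  f_equal. apply IH. simpl. rewrite E1, E3. auto.
Qed.

Lemma map_inj {A B : Type} (g : A -> B) : inj g -> inj (map g).
Proof.
  intros Hg l1. induction l1 as [|a l1 IH]; intros [|b l2]; simpl; intros E; try discriminate; auto.
  injection E; intros E2 E1. apply Hg in E1. subst. f_equal; auto.
Qed.

Lemma inj_comp {A B C : Type} (g : A -> B) (h : B -> C) : inj g -> inj h -> inj (fun a => h (g a)).
Proof. intros Hg Hh a b E. apply Hg, Hh, E. Qed.

Lemma card_chain (V : Type) (e : nat -> V) (He : inj e) (h : V * V -> V) (Hh : inj h)
  (T : Type) (phi : T -> list ((nat * V) * nat)) : inj phi -> exists psi : T -> V, inj psi.
Proof.
  intros Hphi.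
  set (k := fun p : (nat * V) * nat => h (h (e (fst (fst p)), snd (fst p)), e (snd p))).
  assert (Hk : inj k).
  { intros [[a b] c] [[a' b'] c']; unfold k; simpl; intros E.
    apply Hh in E. injection E; intros E1 E2. apply He in E1. apply Hh in E2.
    injection E2; intros E3 E4. apply He in E4. subst; auto. }
  set (q := fun p : nat * V => h (e (fst p), snd p)).
  assert (Hq : inj q).
  { intros [a b] [a' b']; unfold q; simpl; intros E. apply Hh in E. injection E; intros -> E2.
    apply He in E2; subst; auto. }
  exists (fun t => q (length (map k (phi t)), enc (e 0%nat) h (map k (phi t)))).
  intros a b E. apply Hq in E. apply (list_inj (e 0%nat) h Hh) in E.
  apply (map_inj k Hk) in E. apply Hphi, E.
Qed.

Definition rho (k : nat) : R := (/2) ^ k.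
Lemma rho_pos k : 0 < rho k.
Proof. unfold rho. apply pow_lt. lra. Qed.
Lemma rho_S k : rho (S k) = rho k / 2.
Proof. unfold rho. simpl. lra. Qed.
Lemma rho_small e : 0 < e -> exists N, rho N < e.
Proof.
  intros He. destruct (pow_lt_1_zero (/2)) with (y := e) as [N HN]; auto.
  - rewrite Rabs_pos_eq; lra.
  - exists N. specialize (HN N (le_n _)). rewrite Rabs_pos_eq in HN; auto.
    left; apply rho_pos.
Qed.
Lemma rho_anti n m : (n <= m)%nat -> rho m <= rho n.
Proof.
  intros H. induction H as [|m H IH]; [lra|]. rewrite rho_S. pose proof (rho_pos m). lra.
Qed.

Open Scope R_scope.

Lemma dtri {M : MetricSpace} (x y z : M) : dist x z <= dist x y + dist y z.
Proof. apply dist_tri. Qed.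
Lemma dsym {M : MetricSpace} (x y : M) : dist x y = dist y x.
Proof. apply dist_sym. Qed.
Lemma deq0 {M : MetricSpace} (x y : M) : dist x y = 0 <-> x = y.
Proof. apply dist_eq0. Qed.
Lemma dnn {M : MetricSpace} (x y : M) : 0 <= dist x y.
Proof. apply dist_nonneg. Qed.

Section Metric.
Variables (X Y : MetricSpace) (f : X -> Y).
Hypothesis Hc : complete X.
Hypothesis Hcont : continuous_map f.
Hypothesis Hopen : open_map f.
Hypothesis Hsurj : surjective f.

Lemma dist_self {M : MetricSpace} (x : M) : dist x x = 0.
Proof. apply deq0. auto. Qed.

Lemma ball_open (x : X) (eps : R) : open_set (fun u => dist x u < eps).
Proof.
  intros u Hu. exists (eps - dist x u); split; [lra|].
  intros v Hv. pose proof (dtri x u v). lra.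
Qed.

Lemma dens_back (Z : X -> Prop) : (forall y, exists x, Z x /\ f x = y) ->
  dens_le (fun _ : Y => True) Z.
Proof.
  intros HZ D2 [D2Z D2d].
  exists (fun y => exists x, D2 x /\ f x = y). split.
  - split; [auto|]. intros y _ e He.
    destruct (HZ y) as [z [Zz <-]].
    destruct (Hcont z e He) as [d [Hd Hdd]].
    destruct (D2d z Zz d Hd) as [x [D2x Hx]].
    exists (f x); split; eauto.
  - set (g := fun s : sig (fun y => exists x, D2 x /\ f x = y) =>
           constructive_indefinite_description _ (proj2_sig s)).
    exists (fun s => exist D2 (proj1_sig (g s)) (proj1 (proj2_sig (g s)))).
    intros s t E. apply (f_equal (@proj1_sig _ _)) in E; simpl in E.
    apply sig_eq.
    destruct (proj2_sig (g s)) as [_ Es]. destruct (proj2_sig (g t)) as [_ Et].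
    rewrite <- Es, <- Et, E. auto.
Qed.

Lemma finite_dense (D2 : Y -> Prop) : dense_in (fun _ => True) D2 ->
  ~ (exists g : nat -> sig D2, inj g) -> forall y, D2 y.
Proof.
  intros [_ Hd] Hn y. apply NNPP; intros ny. apply Hn.
  assert (nxt : forall s : sig D2, exists t : sig D2, dist y (proj1_sig t) < dist y (proj1_sig s)).
  { intros [d Dd]; simpl. assert (0 < dist y d).
    { destruct (dnn y d) as [h|h]; auto. symmetry in h. apply deq0 in h. subst; tauto. }
    destruct (Hd y I (dist y d) H) as [d' [Dd' Hd']]. exists (exist D2 d' Dd'); auto. }
  destruct (Hd y I 1 Rlt_0_1) as [d0 [Dd0 _]].
  set (nx := fun s => proj1_sig (constructive_indefinite_description _ (nxt s))).
  assert (nxP : forall s, dist y (proj1_sig (nx s)) < dist y (proj1_sig s)).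
  { intros s; unfold nx. destruct (constructive_indefinite_description _ (nxt s)); simpl; auto. }
  set (sq := fix sq n := match n with O => exist D2 d0 Dd0 | S n => nx (sq n) end).
  assert (dec : forall n p, dist y (proj1_sig (sq (S (n + p))%nat)) < dist y (proj1_sig (sq n))).
  { intros n p. induction p as [|p IH].
    - rewrite Nat.add_0_r. simpl. apply nxP.
    - replace (S (n + S p)) with (S (S (n + p))) by lia.
      simpl. simpl in IH. pose proof (nxP (nx (sq (n + p)%nat))). lra. }
  exists sq. intros a b E.
  destruct (Nat.lt_trichotomy a b) as [h|[h|h]]; auto; exfalso.
  - pose proof (dec a (b - a - 1)%nat). replace (S (a + (b - a - 1))) with b in H by lia.
    rewrite E in H. lra.
  - pose proof (dec b (a - b - 1)%nat). replace (S (b + (a - b - 1))) with a in H by lia.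
    rewrite E in H. lra.
Qed.

Lemma sep_exists (r : R) : 0 < r -> exists S : Y -> Prop,
  (forall a b, S a -> S b -> a <> b -> r <= dist a b) /\ (forall y, exists s, S s /\ dist y s < r).
Proof.
  intros Hr.
  destruct (@zorn_sets Y (fun S => forall a b, S a -> S b -> a <> b -> r <= dist a b)) as [S [HS Smax]].
  - intros F HF Ht a b [S1 [F1 S1a]] [S2 [F2 S2b]] ab.
    destruct (Ht S1 S2 F1 F2) as [h|h].
    + apply (HF S2 F2); auto.
    + apply (HF S1 F1); auto.
  - exists S; split; auto. intros y. apply NNPP; intros N.
    apply (Smax (fun z => S z \/ z = y)).
    + auto.
    + exists y; split; auto. intros Sy. apply N. exists y; split; auto. rewrite dist_self; auto.
    + intros a b [Sa| ->] [Sb| ->] ab.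
      * auto.
      * apply Rnot_lt_le. intros h. apply N. exists a. split; auto. rewrite dsym; auto.
      * apply Rnot_lt_le. intros h. apply N. exists b. split; auto.
      * tauto.
Qed.

Section Tree.
Variable D0 : Y -> Prop.
Hypothesis HD0 : forall y e, 0 < e -> exists d, D0 d /\ dist y d < e.
Variable x0 : X.

Definition Idx := (sig D0 * nat)%type.

Definition Cond (w : X) (k : nat) (d : Y) (m : nat) (x : X) : Prop :=
  (k = 0%nat \/ dist w x < 2 * rho k) /\ f x = d /\
  forall z, dist d z < rho m -> exists u, dist x u < rho k /\ f u = z.

Definition child (w : X) (k : nat) (c : Idx) : X :=
  proj1_sig (choose_def x0 (Cond w k (proj1_sig (fst c)) (snd c))).

Lemma child_spec w k c : (exists x, Cond w k (proj1_sig (fst c)) (snd c) x) ->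
  Cond w k (proj1_sig (fst c)) (snd c) (child w k c).
Proof.
  intros H. unfold child. destruct (choose_def x0 (Cond w k (proj1_sig (fst c)) (snd c))); simpl; auto.
Qed.

Fixpoint Ft (l : list Idx) : X :=
  match l with nil => x0 | c :: l0 => child (Ft l0) (length l0) c end.

Lemma pick (x' : X) (eps eta : R) : 0 < eps -> 0 < eta ->
  exists d m x'', D0 d /\ f x'' = d /\ dist x' x'' < eps /\ dist d (f x') < rho m /\
     dist d (f x') < eta /\ forall z, dist d z < rho m -> exists u, dist x' u < eps /\ f u = z.
Proof.
  intros He Hn.
  destruct (Hopen _ (ball_open x' eps) (f x')) as [del [Hdel Hb]].
  { exists x'; split; auto. rewrite dist_self; auto. }
  destruct (rho_small (del/2)) as [m Hm]; [lra|].
  destruct (HD0 (f x') (Rmin (rho m) eta)) as [d [Dd Hd]].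
  { apply Rmin_glb_lt; auto. apply rho_pos. }
  pose proof (Rmin_l (rho m) eta). pose proof (Rmin_r (rho m) eta).
  destruct (Hb d) as [x'' [H1 H2]]; [lra|].
  exists d, m, x''. rewrite (dsym d (f x')).
  split; [exact Dd|split; [exact H2|split; [exact H1|split; [lra|split; [lra|]]]]].
  intros z Hz. apply Hb. pose proof (dtri (f x') d z). lra.
Qed.

Lemma ext (w : X) (k : nat) (x' : X) (eps0 : R) : 0 < eps0 ->
  (k = 0%nat \/ dist w x' + eps0 <= 2 * rho k) ->
  exists c : Idx, (exists x, Cond w k (proj1_sig (fst c)) (snd c) x) /\
    dist (proj1_sig (fst c)) (f x') < rho (snd c) /\ dist (proj1_sig (fst c)) (f x') < rho k.
Proof.
  intros He Hk. pose proof (rho_pos k).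
  set (eps := Rmin (rho k / 2) eps0).
  assert (e1 : eps <= rho k / 2) by apply Rmin_l.
  assert (e2 : eps <= eps0) by apply Rmin_r.
  assert (e3 : 0 < eps) by (apply Rmin_glb_lt; lra).
  destruct (pick x' eps (rho k) e3 H) as [d [m [x'' [Dd [fx [dx [dm [dk Hz]]]]]]]].
  exists (exist D0 d Dd, m); simpl. split; [|split; auto].
  exists x''. split; [|split; auto].
  - destruct Hk as [Hk|Hk]; [left; auto|right]. pose proof (dtri w x' x''). lra.
  - intros z Hdz. destruct (Hz z Hdz) as [u [Hu fu]]. exists u; split; auto.
    pose proof (dtri x'' x' u). rewrite (dsym x'' x') in H0. lra.
Qed.

Definition Inv (y : Y) (l : list Idx) : Prop :=
  match l with
  | nil => False
  | c :: l0 =>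
     (length l0 = 0%nat \/ dist (Ft l0) (Ft (c :: l0)) < 2 * rho (length l0)) /\
     f (Ft (c :: l0)) = proj1_sig (fst c) /\
     (forall z, dist (proj1_sig (fst c)) z < rho (snd c) ->
          exists u, dist (Ft (c :: l0)) u < rho (length l0) /\ f u = z) /\
     dist (proj1_sig (fst c)) y < rho (snd c) /\
     dist (proj1_sig (fst c)) y < rho (length l0)
  end.

Lemma Inv_base y : exists c, Inv y (c :: nil).
Proof.
  destruct (Hsurj y) as [x' <-].
  destruct (ext x0 0 x' 1 Rlt_0_1 (or_introl eq_refl)) as [c [Hex [h1 h2]]].
  exists c. pose proof (child_spec x0 0 c Hex) as [C1 [C2 C3]].
  simpl. split; [|split; [|split; [|split]]]; auto.
Qed.

Lemma Inv_step y c l0 : Inv y (c :: l0) -> exists c', Inv y (c' :: c :: l0).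
Proof.
  intros [_ [Hf [Hb [Hy1 Hy2]]]].
  destruct (Hb y Hy1) as [x' [Hx' <-]].
  set (w := Ft (c :: l0)) in *.
  destruct (ext w (S (length l0)) x' (rho (length l0) - dist w x')) as [c' [Hex [h1 h2]]].
  - lra.
  - right. rewrite rho_S. lra.
  - exists c'. pose proof (child_spec w (S (length l0)) c' Hex) as [C1 [C2 C3]].
    unfold Inv. change (Ft (c' :: c :: l0)) with (child w (S (length l0)) c').
    change (length (c :: l0)) with (S (length l0)).
    split; [destruct C1 as [C1|C1]; [discriminate|right; exact C1]|].
    split; [|split; [|split]]; auto.
Qed.

Definition Zset : X -> Prop := fun x => forall e, 0 < e -> exists l, dist x (Ft l) < e.

Lemma Zsurj : forall y, exists x, Zset x /\ f x = y.
Proof.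
  intros y. destruct (Inv_base y) as [c0 Hc0].
  set (nextc := fun l => proj1_sig (choose_def c0 (fun c => Inv y (c :: l)))).
  assert (nextP : forall l, Inv y l -> Inv y (nextc l :: l)).
  { intros l Hl. unfold nextc. destruct (choose_def c0 (fun c => Inv y (c :: l))) as [c Hcc]; simpl.
    apply Hcc. destruct l as [|c1 l1]; [contradiction|]. apply Inv_step; auto. }
  set (sq := fix sq n := match n with O => c0 :: nil | S n => nextc (sq n) :: sq n end).
  assert (sqI : forall n, Inv y (sq n) /\ length (sq n) = S n).
  { induction n as [|n IH].
    - split; [exact Hc0|reflexivity].
    - destruct IH as [IH1 IH2]. change (sq (S n)) with (nextc (sq n) :: sq n).
      split; [apply nextP; exact IH1|simpl; rewrite IH2; reflexivity]. }
  set (w := fun n => Ft (sq n)).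
  assert (wstep : forall n, dist (w n) (w (S n)) < rho n).
  { intros n. destruct (sqI (S n)) as [I1 L1]. destruct (sqI n) as [_ L0].
    unfold w. simpl sq in *. destruct I1 as [[h|h] _].
    - rewrite L0 in h; discriminate.
    - rewrite L0, rho_S in h. lra. }
  assert (wy : forall n, dist (f (w n)) y < rho n).
  { intros n. destruct (sqI n) as [I1 L1]. unfold w. destruct (sq n) as [|c l0]; [contradiction|].
    simpl in L1. injection L1; intros L. destruct I1 as [_ [Hf [_ [_ H5]]]].
    rewrite Hf. rewrite L in H5. auto. }
  assert (wc : forall n p, dist (w n) (w (n + p)%nat) <= 2 * rho n - 2 * rho (n + p)).
  { intros n p. induction p as [|p IH].
    - rewrite Nat.add_0_r, dist_self. lra.
    - pose proof (dtri (w n) (w (n + p)%nat) (w (n + S p)%nat)).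
      replace (n + S p)%nat with (S (n + p)) in * by lia.
      pose proof (wstep (n + p)%nat). rewrite rho_S. lra. }
  assert (wc2 : forall n m, (n <= m)%nat -> dist (w n) (w m) <= 2 * rho n).
  { intros n m Hnm. replace m with (n + (m - n))%nat by lia. pose proof (wc n (m - n)%nat).
    pose proof (rho_pos (n + (m - n))). lra. }
  destruct (Hc w) as [xs Hxs].
  { intros e He. destruct (rho_small (e/4)) as [N HN]; [lra|]. exists N. intros a b Ha Hb.
    pose proof (wc2 N a Ha). pose proof (wc2 N b Hb). pose proof (dtri (w a) (w N) (w b)).
    rewrite (dsym (w a) (w N)) in H1. lra. }
  exists xs. split.
  - intros e He. destruct (Hxs e He) as [N HN]. exists (sq N). rewrite dsym. apply HN; auto.
  - apply deq0. apply NNPP; intros Hne.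
    assert (Hp : 0 < dist (f xs) y).
    { destruct (dnn (f xs) y) as [h|h]; auto. exfalso; apply Hne; symmetry; exact h. }
    set (e := dist (f xs) y) in *.
    destruct (Hcont xs (e/2)) as [del [Hdel Hd]]; [lra|].
    destruct (Hxs del Hdel) as [N1 HN1].
    destruct (rho_small (e/2)) as [N2 HN2]; [lra|].
    set (N := Nat.max N1 N2).
    assert (h1 : dist (f xs) (f (w N)) < e/2).
    { apply Hd. rewrite dsym. apply HN1. lia. }
    assert (h2 : dist (f (w N)) y < e/2).
    { pose proof (wy N). assert (rho N <= rho N2).
      { apply rho_anti. lia. }
      lra. }
    pose proof (dtri (f xs) (f (w N)) y). unfold e in *. lra.
Qed.

Lemma Zcard : exists phi : sig (fun x => exists l, Ft l = x) -> list Idx, inj phi.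
Proof.
  exists (fun s : sig (fun x => exists l, Ft l = x) =>
     proj1_sig (constructive_indefinite_description (fun l => Ft l = proj1_sig s) (proj2_sig s))).
  intros s t E. apply sig_eq.
  pose proof (proj2_sig (constructive_indefinite_description (fun l => Ft l = proj1_sig s) (proj2_sig s))) as Hs.
  pose proof (proj2_sig (constructive_indefinite_description (fun l => Ft l = proj1_sig t) (proj2_sig t))) as Ht.
  simpl in Hs, Ht. rewrite <- Hs, <- Ht, E. auto.
Qed.

Lemma Zdense : dense_in Zset (fun x => exists l, Ft l = x).
Proof.
  split.
  - intros x [l <-] e He. exists l. rewrite dist_self; auto.
  - intros x Zx e He. destruct (Zx e He) as [l Hl]. exists (Ft l); split; eauto.
Qed.

End Tree.

Lemma main_ds : density_surjective f.
Proof.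
  destruct (classic (exists g : nat -> Y, inj g)) as [[g Hg]|Hfin].
  - assert (D2inf : forall D2 : Y -> Prop, dense_in (fun _ => True) D2 -> exists e : nat -> sig D2, inj e).
    { intros D2 HD2. apply NNPP; intros N. pose proof (finite_dense D2 HD2 N) as All.
      apply N. exists (fun n => exist D2 (g n) (All (g n))). intros a b E. apply Hg.
      apply (f_equal (@proj1_sig _ _)) in E. exact E. }
    assert (Sx : forall n, exists S : Y -> Prop,
      (forall a b : Y, S a -> S b -> a <> b -> rho n <= dist a b) /\ (forall y : Y, exists s, S s /\ dist y s < rho n)).
    { intros n. apply sep_exists. apply rho_pos. }
    set (Sn := fun n => proj1_sig (constructive_indefinite_description _ (Sx n))).
    assert (SnP : forall n, (forall a b : Y, Sn n a -> Sn n b -> a <> b -> rho n <= dist a b) /\ (forall y, exists s, Sn n s /\ dist y s < rho n)).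
    { intros n. exact (proj2_sig (constructive_indefinite_description _ (Sx n))). }
    set (D0 := fun y => exists n, Sn n y).
    assert (HD0 : forall y e, 0 < e -> exists d, D0 d /\ dist y d < e).
    { intros y e He. destruct (rho_small e He) as [N HN]. destruct (proj2 (SnP N) y) as [s [Ss Hs]].
      exists s. split; [exists N; exact Ss|lra]. }
    destruct (Hsurj (g 0%nat)) as [x0 _].
    exists (Zset D0 x0). split; [split|].
    + intros D2 HD2. exists (fun x => exists l, Ft D0 x0 l = x). split; [apply Zdense|].
      destruct (D2inf D2 HD2) as [e He]. destruct (hess_main (sig D2) e He) as [h Hh].
      destruct (Zcard D0 x0) as [phi Hphi].
      set (nf := fun s : sig D0 => proj1_sig (constructive_indefinite_description _ (proj2_sig s))).
      assert (nfP : forall s, Sn (nf s) (proj1_sig s)).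
      { intros s. exact (proj2_sig (constructive_indefinite_description _ (proj2_sig s))). }
      assert (dex : forall s : sig D0, exists d, D2 d /\ dist (proj1_sig s) d < rho (nf s) / 2).
      { intros s. apply (proj2 HD2); auto. pose proof (rho_pos (nf s)). lra. }
      set (df := fun s => constructive_indefinite_description _ (dex s)).
      set (q := fun s : sig D0 => (nf s, exist D2 (proj1_sig (df s)) (proj1 (proj2_sig (df s))))).
      assert (Hq : inj q).
      { intros s t E. unfold q in E. injection E; intros E1 E2.
        pose proof (proj2 (proj2_sig (df s))) as Ds. pose proof (proj2 (proj2_sig (df t))) as Dt.
        set (ds := proj1_sig (df s)) in *. set (dt := proj1_sig (df t)) in *.
        rewrite E2 in Ds. rewrite E1 in Ds.
        apply sig_eq. apply NNPP; intros Hne.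
        pose proof (proj1 (SnP (nf t)) (proj1_sig s) (proj1_sig t)) as Hsep.
        assert (Hs' := nfP s). rewrite E2 in Hs'.
        specialize (Hsep Hs' (nfP t) Hne).
        pose proof (dtri (proj1_sig s) dt (proj1_sig t)).
        rewrite (dsym dt (proj1_sig t)) in H. lra. }
      set (qq := fun c : Idx D0 => (q (fst c), snd c)).
      assert (Hqq : inj qq).
      { intros [a b] [a' b']; unfold qq; simpl; intros E.
        assert (E1 : q a = q a') by (apply (f_equal fst) in E; exact E).
        assert (E2 : b = b') by (apply (f_equal snd) in E; exact E).
        apply Hq in E1. subst; auto. }
      destruct (card_chain (sig D2) e He h Hh _ (fun s => map qq (phi s))) as [psi Hpsi].
      { apply inj_comp; auto. apply map_inj; auto. }
      exists psi. exact Hpsi.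
    + apply dens_back. apply Zsurj; auto.
    + apply Zsurj; auto.
  - set (s := fun y => proj1_sig (constructive_indefinite_description _ (Hsurj y))).
    assert (sP : forall y, f (s y) = y).
    { intros y. exact (proj2_sig (constructive_indefinite_description _ (Hsurj y))). }
    exists (fun x => exists y, s y = x). split; [split|].
    + intros D2 HD2.
      assert (All : forall y, D2 y).
      { apply finite_dense; auto. intros [e He]. apply Hfin.
        exists (fun n => proj1_sig (e n)). intros a b E. apply He. apply sig_eq. exact E. }
      exists (fun x => exists y, s y = x). split.
      * split; auto. intros x Zx eps Heps. exists x. split; auto. rewrite dist_self. exact Heps.
      * exists (fun t => exist D2 (f (proj1_sig t)) (All _)).
        intros a b E. apply (f_equal (@proj1_sig _ _)) in E. simpl in E.
        apply sig_eq. destruct a as [xa [ya <-]]. destruct b as [xb [yb <-]]. simpl in *.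
        rewrite !sP in E. subst; auto.
    + apply dens_back. intros y. exists (s y). split; eauto.
    + intros y. exists (s y). split; eauto.
Qed.
End Metric.


Theorem theorem1p1 (X Y : MetricSpace) (f : X -> Y) :
  complete X -> continuous_map f -> open_map f -> surjective f ->
  density_surjective f.
Proof.
  intros Hc Hcont Hopen Hsurj. eapply main_ds; eauto.
Qed.
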